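(* Let $X$ be a phylogenetic vertex of a quiver. Then: (i) $X$ has a primitive ancestor; (ii) all primitive ancestors of $X$ are isotypic to each other; (iii) every short full evolution for $X$ is universal; (iv) every vertex appearing in a short full evolution for $X$ is phylogenetic.
   Context: A quiver consists of a class of vertices and, for each ordered pair of vertices $(A,B)$, a set of edges $A\to B$ (loops and multiple edges allowed). An evolution of length $m\ge 0$ is a sequence $A_0\leftarrow A_1\leftarrow\cdots\leftarrow A_m$ of vertices together with edges $A_k\to A_{k-1}$ ($1\le k\le m$); $A_0$ is its initial and $A_m$ its terminal vertex. Write $A\le B$ ($A$ is an ancestor of $B$) if there is an evolution with initial vertex $A$ and terminal vertex $B$; $A,B$ are isotypic ($A\sim B$) if $A\le B$ and $B\le A$. A vertex $A$ is primitive if every ancestor of $A$ is isotypic to $A$. A full evolution for $X$ is an evolution with primitive initial vertex and terminal vertex $X$. The height $h(X)$ is the smallest length of a full evolution for $X$ ($\infty$ if none); a full evolution for $X$ is short if its length equals $h(X)$. An evolution $\alpha=(A_0\leftarrow\cdots\leftarrow A_m)$ embeds in $\beta=(B_0\leftarrow\cdots\leftarrow B_n)$ if $m\le n$ and there are $0\le r_0<\cdots<r_m\le n$ with $A_k\sim B_{r_k}$. A universal evolution for $X$ is a full evolution for $X$ embedding in every full evolution for $X$; $X$ is phylogenetic if one exists. *)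

(* Defs.v *)
From Stdlib Require Import Arith.

Set Implicit Arguments.

Record evolution (V : Type) (E : V -> V -> Type) := Evolution {
  ev_len : nat;
  ev_vert : nat -> V;
  ev_edge : forall k, k < ev_len -> E (ev_vert (S k)) (ev_vert k)
}.

Arguments ev_len {V E} e.
Arguments ev_vert {V E} e _.

Section Quiver.
Variables (V : Type) (E : V -> V -> Type).

Definition initial (a : evolution E) : V := ev_vert a 0.
Definition terminal (a : evolution E) : V := ev_vert a (ev_len a).

Definition ancestor (A B : V) : Prop :=
  exists a : evolution E, initial a = A /\ terminal a = B.

Definition isotypic (A B : V) : Prop := ancestor A B /\ ancestor B A.

Definition primitive (A : V) : Prop :=
  forall B, ancestor B A -> isotypic B A.

Definition full_evolution (X : V) (a : evolution E) : Prop :=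
  primitive (initial a) /\ terminal a = X.

(* short: a full evolution whose length equals the height h(X), i.e. the
   least length of a full evolution for X. *)
Definition short_evolution (X : V) (a : evolution E) : Prop :=
  full_evolution X a /\
  forall b : evolution E, full_evolution X b -> ev_len a <= ev_len b.

Definition embeds (a b : evolution E) : Prop :=
  ev_len a <= ev_len b /\
  exists r : nat -> nat,
    (forall i j, i < j -> j <= ev_len a -> r i < r j) /\
    r (ev_len a) <= ev_len b /\
    (forall k, k <= ev_len a -> isotypic (ev_vert a k) (ev_vert b (r k))).

Definition universal_evolution (X : V) (a : evolution E) : Prop :=
  full_evolution X a /\
  forall b : evolution E, full_evolution X b -> embeds a b.

Definition phylogenetic (X : V) : Prop :=
  exists a : evolution E, universal_evolution X a.

End Quiver.

(* Main.v *)
Require Import Defs.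
From Stdlib Require Import Arith Lia.

Lemma gap (r : nat -> nat) (n : nat) :
  (forall i j, i < j -> j <= n -> r i < r j) ->
  forall i, i <= n -> r i + (n - i) <= r n.
Proof.
  intros Hr.
  assert (forall d, d <= n -> r (n - d) + d <= r n).
  { induction d as [|d IH]; intros Hd.
    - rewrite Nat.sub_0_r; lia.
    - assert (r (n - S d) < r (n - d)) by (apply Hr; lia). specialize (IH ltac:(lia)). lia. }
  intros i Hi. specialize (H (n - i) ltac:(lia)).
  replace (n - (n - i)) with i in H by lia. exact H.
Qed.

Lemma gap2 (r : nat -> nat) (n : nat) :
  (forall i j, i < j -> j <= n -> r i < r j) ->
  forall i j, i <= j -> j <= n -> r i + (j - i) <= r j.
Proof.
  intros Hr i j Hij Hj. apply (gap r j); auto.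
  intros a b Hab Hb. apply Hr; lia.
Qed.

Section S.
Context {V : Type} {E : V -> V -> Type}.

Lemma seg_ex (a : evolution E) i j : i <= j -> j <= ev_len a ->
  exists c : evolution E, ev_len c = j - i /\ forall t, ev_vert c t = ev_vert a (i + t).
Proof.
  intros Hij Hj.
  assert (H : forall k, k < j - i -> E (ev_vert a (i + S k)) (ev_vert a (i + k))).
  { intros k Hk. rewrite Nat.add_succ_r. apply (ev_edge a). lia. }
  exists (@Evolution V E (j - i) (fun t => ev_vert a (i + t)) H). simpl. auto.
Qed.

Lemma concat_ex (a b : evolution E) : terminal a = initial b ->
  exists c : evolution E, ev_len c = ev_len a + ev_len b /\
    (forall i, i <= ev_len a -> ev_vert c i = ev_vert a i) /\
    (forall i, ev_vert c (ev_len a + i) = ev_vert b i).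
Proof.
  intros Hab. unfold terminal, initial in Hab.
  set (la := ev_len a) in *.
  set (f := fun i => if i <=? la then ev_vert a i else ev_vert b (i - la)).
  assert (Hf1 : forall i, i <= la -> f i = ev_vert a i).
  { intros i Hi. unfold f. destruct (Nat.leb_spec i la); [reflexivity|lia]. }
  assert (Hf2 : forall i, la <= i -> f i = ev_vert b (i - la)).
  { intros i Hi. unfold f. destruct (Nat.leb_spec i la).
    - assert (i = la) by lia. subst i. rewrite Nat.sub_diag. exact Hab.
    - reflexivity. }
  assert (H : forall k, k < la + ev_len b -> E (f (S k)) (f k)).
  { intros k Hk. destruct (le_lt_dec (S k) la) as [h|h].
    - rewrite (Hf1 (S k) h), (Hf1 k ltac:(lia)). apply (ev_edge a). exact h.
    - rewrite (Hf2 (S k) ltac:(lia)), (Hf2 k ltac:(lia)).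
      replace (S k - la) with (S (k - la)) by lia. apply (ev_edge b). lia. }
  exists (@Evolution V E (la + ev_len b) f H). simpl. split; [reflexivity|split].
  - exact Hf1.
  - intros i. rewrite Hf2 by lia. f_equal. lia.
Qed.

Lemma anc_refl (A : V) : ancestor E A A.
Proof.
  assert (H : forall k, k < 0 -> E ((fun _ : nat => A) (S k)) ((fun _ : nat => A) k)).
  { intros k Hk. exfalso. lia. }
  exists (@Evolution V E 0 (fun _ => A) H). split; reflexivity.
Qed.

Lemma anc_trans (A B C : V) : ancestor E A B -> ancestor E B C -> ancestor E A C.
Proof.
  intros [a [Ha1 Ha2]] [b [Hb1 Hb2]].
  destruct (concat_ex a b) as [c [Hl [H1 H2]]]; [congruence|].
  exists c. unfold initial, terminal in *. split.
  - rewrite H1 by lia. exact Ha1.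
  - rewrite Hl, H2. exact Hb2.
Qed.

Lemma anc_seg (a : evolution E) i j : i <= j -> j <= ev_len a ->
  ancestor E (ev_vert a i) (ev_vert a j).
Proof.
  intros Hij Hj. destruct (seg_ex a i j Hij Hj) as [c [Hl Hv]].
  exists c. unfold initial, terminal. rewrite Hl, !Hv. split; f_equal; lia.
Qed.

Lemma iso_refl A : isotypic E A A.
Proof. split; apply anc_refl. Qed.
Lemma iso_sym A B : isotypic E A B -> isotypic E B A.
Proof. intros [h1 h2]; split; auto. Qed.
Lemma iso_trans A B C : isotypic E A B -> isotypic E B C -> isotypic E A C.
Proof. intros [h1 h2] [h3 h4]; split; eapply anc_trans; eauto. Qed.

End S.

Theorem theorem5p3 (V : Type) (E : V -> V -> Type) (X : V) :
  phylogenetic E X ->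
  (exists A, primitive E A /\ ancestor E A X) /\
  (forall A B, primitive E A -> ancestor E A X ->
               primitive E B -> ancestor E B X -> isotypic E A B) /\
  (forall a : evolution E, short_evolution X a -> universal_evolution X a) /\
  (forall a : evolution E, short_evolution X a ->
     forall k, k <= ev_len a -> phylogenetic E (ev_vert a k)).
Proof.
  intros [u [[Hup Hut] Hemb]].
  assert (P1 : forall A, primitive E A -> ancestor E A X -> isotypic E A (initial u)).
  { intros A HA [b [Hb1 Hb2]].
    assert (Fb : full_evolution X b) by (split; [rewrite Hb1|]; assumption).
    destruct (Hemb b Fb) as [Hl [r [Hr1 [Hr2 Hr3]]]].
    assert (Hr0 : r 0 <= r (ev_len u)).
    { pose proof (gap r (ev_len u) Hr1 0 ltac:(lia)). lia. }
    specialize (Hr3 0 ltac:(lia)).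
    apply Hup. apply anc_trans with (ev_vert b (r 0)).
    - rewrite <- Hb1. apply anc_seg; lia.
    - apply Hr3. }
  assert (P3 : forall a : evolution E, short_evolution X a -> universal_evolution X a).
  { intros a [Fa Hsh]. split; [exact Fa|].
    destruct (Hemb a Fa) as [Hl [s [Hs1 [Hs2 Hs3]]]].
    specialize (Hsh u (conj Hup Hut)).
    assert (Hs : forall k, k <= ev_len u -> s k = k).
    { intros k Hk. pose proof (gap s _ Hs1 k Hk).
      pose proof (gap2 s _ Hs1 0 k ltac:(lia) Hk). lia. }
    intros b Fb. destruct (Hemb b Fb) as [Hl' [r [Hr1 [Hr2 Hr3]]]].
    assert (Heq : ev_len a = ev_len u) by lia.
    split; [lia|]. exists r. rewrite Heq. split; [exact Hr1|split; [exact Hr2|]].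
    intros k Hk. apply iso_trans with (ev_vert u k).
    - apply iso_sym. pose proof (Hs3 k Hk) as HH. rewrite (Hs k Hk) in HH. exact HH.
    - apply Hr3. exact Hk. }
  split; [|split; [|split]].
  - exists (initial u). split; [exact Hup|]. exists u. auto.
  - intros A B HA HAX HB HBX. apply iso_trans with (initial u).
    + apply P1; auto.
    + apply iso_sym. apply P1; auto.
  - exact P3.
  - intros a Hsa k Hk.
    destruct (P3 a Hsa) as [[Fa1 Fa2] Hua].
    destruct (seg_ex a 0 k ltac:(lia) Hk) as [p [Hpl Hpv]].
    rewrite Nat.sub_0_r in Hpl. exists p. split.
    + split.
      * unfold initial. rewrite Hpv. exact Fa1.
      * unfold terminal. rewrite Hpl, Hpv. f_equal; lia.
    + intros c [Fc1 Fc2].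
      destruct (seg_ex a k (ev_len a) Hk ltac:(lia)) as [sf [Hsl Hsv]].
      destruct (concat_ex c sf) as [cc [Hcl [Hc1 Hc2]]].
      { rewrite Fc2. unfold initial. rewrite Hsv. f_equal; lia. }
      assert (Fcc : full_evolution X cc).
      { split.
        - unfold initial. rewrite Hc1 by lia. exact Fc1.
        - unfold terminal. rewrite Hcl, Hc2, Hsv, Hsl.
          rewrite <- Fa2. unfold terminal. f_equal; lia. }
      destruct (Hua cc Fcc) as [Hl [r [Hr1 [Hr2 Hr3]]]].
      pose proof (gap2 r _ Hr1 k (ev_len a) Hk ltac:(lia)) as G1.
      pose proof (gap2 r _ Hr1 0 k ltac:(lia) Hk) as G2.
      rewrite Hcl, Hsl in *.
      split; [lia|]. exists r. rewrite Hpl. split; [|split].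
      * intros i j Hij Hj. apply Hr1; lia.
      * lia.
      * intros i Hi. rewrite Hpv. simpl.
        assert (r i <= r k).
        { pose proof (gap2 r _ Hr1 i k Hi Hk). lia. }
        rewrite <- (Hc1 (r i)) by lia. apply Hr3. lia.
Qed.
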